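(* In the safe linear bandit setting and with the ROFUL quantities described in the context, suppose $\mathcal{X}$ is star-convex with respect to the origin, $\|x\|\le1$ for all $x\in\mathcal{X}$, and $\theta^\top x_*>0$. Then, on the event $\mathcal{E}_{\mathrm{conf}}$, ROFUL is equivalent to an algorithm that, for all $t\in[T]$, chooses $$x_t\in\arg\max_{x\in\bar{\mathcal{Y}}_t^p}\left(\hat\theta_t^\top x+\kappa_t(x)\beta_t\|x\|_{V_t^{-1}}\right);$$ that is, for every $t$, the set of actions ROFUL may play at round $t$ (over all admissible choices of the maximizer $\tilde x_t$) coincides with this argmax set.
   Context: Safe linear bandit setting: at round $t$ the learner plays $x_t$ in a closed set $\mathcal{X}\subseteq\mathbb{R}^d$ and observes $y_t=\theta^\top x_t+\epsilon_t$, $z_t=a^\top x_t+\eta_t$, with $\theta,a$ unknown, $b>0$ known; $\mathcal{Y}=\{x\in\mathcal{X}:a^\top x\le b\}$, $x_*\in\arg\max_{\mathcal{Y}}\theta^\top x$. Constants $S_a\ge\|a\|$, $S_\theta\ge\|\theta\|$, $S=\max(S_a,S_\theta)$, $\nu=b/S_a\le 1$, $\rho>0$, $\delta\in(0,1)$, $\lambda\ge1$. ROFUL: at round $t$, $V_t=\lambda I+\sum_{k<t}x_kx_k^\top$, $\hat a_t=V_t^{-1}\sum_{k<t}x_kz_k$, $\hat\theta_t=V_t^{-1}\sum_{k<t}x_ky_k$, $\beta_t=\rho\sqrt{d\log\left(\frac{1+(t-1)/\lambda}{\delta/2}\right)}+\sqrt\lambda S$, $\|x\|_M=\sqrt{x^\top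 Mx}$; $\mathcal{Y}_t^p=\{x\in\mathcal{X}:\hat a_t^\top x+\beta_t\|x\|_{V_t^{-1}}\le b\}$, $\mathcal{Y}_t^o=\{x\in\mathcal{X}:\hat a_t^\top x-\beta_t\|x\|_{V_t^{-1}}\le b\}$; $\tilde x_t\in\arg\max_{x\in\mathcal{Y}_t^o}(\hat\theta_t^\top x+\beta_t\|x\|_{V_t^{-1}})$; $\tilde b_t=\min(\nu/\|\tilde x_t\|,1)$, $\mu_t=\max\{\mu\in[0,1]:\mu\tilde x_t\in\mathcal{Y}_t^p\}$, $\gamma_t=\max(\tilde b_t,\mu_t)$; play $x_t=\gamma_t\tilde x_t$. $\mathcal{E}_{\mathrm{conf}}$ is the event that $|x^\top(\hat\theta_t-\theta)|\le\beta_t\|x\|_{V_t^{-1}}$ and $|x^\top(\hat a_t-a)|\le\beta_t\|x\|_{V_t^{-1}}$ for all $x\in\mathcal{X}$ and all $t\ge1$. Further notation: $\mathbb{B}$ is the closed Euclidean unit ball; $\hat{\mathcal{Y}}_t^p:=\mathcal{Y}_t^p\cup(\nu\mathbb{B}\cap\mathcal{Y}_t^o)$; $\bar{\mathcal{Y}}_t^p:=\{x\in\hat{\mathcal{Y}}_t^p:\zeta x\notin\hat{\mathcal{Y}}_t^p\ \forall\zeta>1\}$; $\alpha_t(x):=\max\{\mu\ge0:\mu x\in\mathcal{Y}_t^o\}$; and for $x\ne0$, $\kappa_t(x):=(\alpha_t(x)-1)\frac{\hat\theta_t^\top x}{\beta_t\|x\|_{V_t^{-1}}}+\alpha_t(x)$.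 *)

(* Defs.v *)
From mathcomp Require Import all_boot all_order all_algebra all_classical all_reals all_analysis.
Import Order.TTheory GRing.Theory Num.Theory numFieldNormedType.Exports.
Set Implicit Arguments. Unset Strict Implicit. Unset Printing Implicit Defensive.
Local Open Scope ring_scope.
Local Open Scope classical_set_scope.

Section SafeBandit.
Variables (R : realType) (d : nat).
Implicit Types (u v x : 'cV[R]_d) (M : 'M[R]_d).

Definition dotv u v : R := (u^T *m v) 0 0.
Definition normv x : R := Num.sqrt (dotv x x).
Definition mnorm M x : R := Num.sqrt ((x^T *m M *m x) 0 0).

Definition is_argmax (A : set 'cV[R]_d) (f : 'cV[R]_d -> R) x :=
  A x /\ forall y, A y -> f y <= f x.
Definition is_max (A : set R) (m : R) := A m /\ forall y, A y -> y <= m.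

Definition star_convex0 (X : set 'cV[R]_d) :=
  forall x, X x -> forall mu : R, 0 <= mu <= 1 -> X (mu *: x).

(* Round-t statistics of ROFUL from the history (x_k, y_k, z_k), k = 1..t-1 *)
Definition Vmat (lam : R) (xs : nat -> 'cV[R]_d) (t : nat) : 'M[R]_d :=
  lam%:M + \sum_(1 <= k < t) (xs k *m (xs k)^T).
Definition lsq (lam : R) (xs : nat -> 'cV[R]_d) (obs : nat -> R) (t : nat) : 'cV[R]_d :=
  invmx (Vmat lam xs t) *m \sum_(1 <= k < t) (obs k *: xs k).
Definition beta (rho lam delta S : R) (t : nat) : R :=
  rho * Num.sqrt (d%:R * ln ((1 + (t - 1)%:R / lam) / (delta / 2)))
  + Num.sqrt lam * S.

(* Generic round objects, given Vi = V_t^{-1}, ah = hat a_t, th = hat theta_t,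
   bt = beta_t. *)
Section Round.
Variables (X : set 'cV[R]_d) (b nu : R) (Vi : 'M[R]_d) (ah th : 'cV[R]_d) (bt : R).

Definition Ypess : set 'cV[R]_d :=
  [set x | X x /\ dotv ah x + bt * mnorm Vi x <= b].
Definition Yopt : set 'cV[R]_d :=
  [set x | X x /\ dotv ah x - bt * mnorm Vi x <= b].
Definition ucb x : R := dotv th x + bt * mnorm Vi x.

(* the set of actions ROFUL may play (over all maximizers tilde x_t) *)
Definition roful_plays : set 'cV[R]_d :=
  [set x | exists xt mu,
     [/\ is_argmax Yopt ucb xt,
         is_max [set m | 0 <= m <= 1 /\ Ypess (m *: xt)] mu &
         x = Num.max (Num.min (nu / normv xt) 1) mu *: xt]].

Definition Yhat : set 'cV[R]_d :=
  Ypess `|` ([set x | normv x <= nu] `&` Yopt).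
Definition Ybar : set 'cV[R]_d :=
  [set x | Yhat x /\ forall z : R, 1 < z -> ~ Yhat (z *: x)].
(* alpha_t(x) = max {mu >= 0 : mu x in Yopt} (written as a supremum) *)
Definition alpha x : R := sup [set m | 0 <= m /\ Yopt (m *: x)].
Definition kappa x : R :=
  (alpha x - 1) * (dotv th x / (bt * mnorm Vi x)) + alpha x.
Definition alt_obj x : R := dotv th x + kappa x * bt * mnorm Vi x.
Definition alt_plays : set 'cV[R]_d := [set x | is_argmax Ybar alt_obj x].
End Round.

End SafeBandit.

(* Main.v *)
Require Import Defs.
From mathcomp Require Import all_boot all_order all_algebra all_classical all_reals all_analysis.
From mathcomp Require Import ring lra.
Import Order.TTheory GRing.Theory Num.Theory numFieldNormedType.Exports.
Local Open Scope ring_scope.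
Local Open Scope classical_set_scope.

Section Basic.
Context {R : realType} {d : nat}.
Implicit Types (u v x y : 'cV[R]_d) (M : 'M[R]_d).

Lemma dotvZ u v (m : R) : dotv u (m *: v) = m * dotv u v.
Proof. by rewrite /dotv -scalemxAr mxE. Qed.

Lemma dotvD u v w : dotv u (v + w) = dotv u v + dotv u w.
Proof. by rewrite /dotv mulmxDr mxE. Qed.

Lemma dotvN u v : dotv u (- v) = - dotv u v.
Proof. by rewrite /dotv mulmxN mxE. Qed.

Lemma dotvC u v : dotv u v = dotv v u.
Proof. by rewrite /dotv -[u^T *m v]trmxK trmx_mul trmxK [in LHS]mxE. Qed.

Lemma dotv0 u : dotv u 0 = 0.
Proof. by rewrite /dotv mulmx0 mxE. Qed.

Lemma quadZ M x (m : R) :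
  ((m *: x)^T *m M *m (m *: x)) 0 0 = m ^+ 2 * (x^T *m M *m x) 0 0.
Proof.
have -> : (m *: x)^T = m *: x^T by rewrite linearZ.
by rewrite -!scalemxAl -scalemxAr !mxE mulrA expr2.
Qed.

Lemma mnormZ M x (m : R) : mnorm M (m *: x) = `|m| * mnorm M x.
Proof. by rewrite /mnorm quadZ sqrtrM ?sqr_ge0 // sqrtr_sqr. Qed.

Lemma mnorm_ge0 M x : 0 <= mnorm M x.
Proof. exact: sqrtr_ge0. Qed.

Lemma normvE x : normv x = mnorm 1%:M x.
Proof. by rewrite /normv /mnorm mulmx1. Qed.

Lemma normvZ x (m : R) : normv (m *: x) = `|m| * normv x.
Proof. by rewrite !normvE mnormZ. Qed.

Lemma dotv_self x : dotv x x = \sum_i (x i 0) ^+ 2.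
Proof. by rewrite /dotv mxE; apply: eq_bigr => i _; rewrite mxE expr2. Qed.

Lemma dotv_self_gt0 x : x != 0 -> 0 < dotv x x.
Proof.
move=> x0; rewrite dotv_self lt_neqAle sumr_ge0 ?andbT; last by move=> i _; exact: sqr_ge0.
apply: contra x0 => /eqP/esym/eqP; rewrite psumr_eq0; last by move=> i _; exact: sqr_ge0.
move=> /allP H; apply/eqP/matrixP => i j; rewrite ord1 mxE.
by have := H i (mem_index_enum _); rewrite /= sqrf_eq0 => /eqP.
Qed.

Lemma normv_gt0 x : x != 0 -> 0 < normv x.
Proof. by move=> /dotv_self_gt0 h; rewrite /normv sqrtr_gt0. Qed.

End Basic.

Section Round.
Variables (R : realType) (d : nat).
Variables (X : set 'cV[R]_d) (b nu : R) (Vi : 'M[R]_d) (ah th : 'cV[R]_d) (bt : R) (xs : 'cV[R]_d).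
Hypotheses (clX : closed X) (stX : star_convex0 X)
  (bndX : forall x, X x -> normv x <= 1) (b0 : 0 < b) (nu0 : 0 < nu) (bt0 : 0 < bt)
  (pd : forall x, x != 0 -> 0 < mnorm Vi x)
  (Yxs : Yopt X b Vi ah bt xs) (uxs : 0 < ucb Vi th bt xs).

Local Notation Yo := (Yopt X b Vi ah bt).
Local Notation Yp := (Ypess X b Vi ah bt).
Local Notation U := (ucb Vi th bt).
Local Notation Yh := (Yhat X b nu Vi ah bt).
Local Notation Yb := (Ybar X b nu Vi ah bt).
Local Notation al := (alpha X b Vi ah bt).
Local Notation obj := (alt_obj X b Vi ah th bt).

Definition co x := dotv ah x - bt * mnorm Vi x.
Definition cp x := dotv ah x + bt * mnorm Vi x.

Lemma coZ x m : 0 <= m -> co (m *: x) = m * co x.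
Proof. by move=> m0; rewrite /co dotvZ mnormZ ger0_norm // mulrBr mulrCA. Qed.

Lemma cpZ x m : 0 <= m -> cp (m *: x) = m * cp x.
Proof. by move=> m0; rewrite /cp dotvZ mnormZ ger0_norm // mulrDr mulrCA. Qed.

Lemma ucbZ x m : 0 <= m -> U (m *: x) = m * U x.
Proof. by move=> m0; rewrite /ucb dotvZ mnormZ ger0_norm // mulrDr mulrCA. Qed.

Lemma ucb0 : U 0 = 0.
Proof. by rewrite -(scale0r (0 : 'cV[R]_d)) ucbZ // mul0r. Qed.

Lemma YoE x : Yo x <-> X x /\ co x <= b.
Proof. by []. Qed.

Lemma YpE x : Yp x <-> X x /\ cp x <= b.
Proof. by []. Qed.

Lemma le_scale (c m : R) : 0 <= m <= 1 -> c <= b -> m * c <= b.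
Proof.
move=> /andP[m0 m1] cb; have b0' := b0; case: (lerP c 0) => hc.
  by apply: le_trans (ltW b0'); rewrite mulr_ge0_le0.
by apply: le_trans cb; rewrite ler_piMl // ltW.
Qed.

Lemma Yo_down x m : 0 <= m <= 1 -> Yo x -> Yo (m *: x).
Proof.
move=> hm [Xx cb]; have /andP[m0 _] := hm; split; first exact: (stX x Xx m hm).
by have := coZ x m m0; rewrite /co => ->; exact: le_scale.
Qed.

Lemma Yp_down x m : 0 <= m <= 1 -> Yp x -> Yp (m *: x).
Proof.
move=> hm [Xx cb]; have /andP[m0 _] := hm; split; first exact: (stX x Xx m hm).
by have := cpZ x m m0; rewrite /cp => ->; exact: le_scale.
Qed.

Lemma bm_ge0 x : 0 <= bt * mnorm Vi x.
Proof. by rewrite mulr_ge0 ?mnorm_ge0 // ltW. Qed.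

Lemma Yp_Yo x : Yp x -> Yo x.
Proof. by move=> [Xx h]; split => //; apply: le_trans h; have := bm_ge0 x; lra. Qed.

Lemma Yh_Yo x : Yh x -> Yo x.
Proof. by case=> [/Yp_Yo|[]]. Qed.

Lemma Yh_down x m : 0 <= m <= 1 -> Yh x -> Yh (m *: x).
Proof.
move=> hm [h|[hn h]]; first by left; exact: Yp_down.
right; split; last exact: Yo_down.
have /andP[m0 m1] := hm; rewrite /= normvZ ger0_norm //.
have n0 : 0 <= normv x by exact: sqrtr_ge0.
by apply: le_trans hn; rewrite ler_piMl.
Qed.

Lemma ray_bound x m : X (m *: x) -> x != 0 -> 0 <= m -> m <= (normv x)^-1.
Proof.
move=> /bndX; rewrite normvZ => h x0 m0; have n0 := normv_gt0 _ x0.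
by rewrite -(mul1r (normv x)^-1) ler_pdivlMr //; move: h; rewrite ger0_norm.
Qed.

Lemma closed_half (c k : R) : closed [set m : R | m * c <= k].
Proof.
apply: (@preimage_closed _ _ (fun m : R => m * c) [set y | y <= k]); last exact: closed_le.
by move=> m _; exact: scalel_continuous.
Qed.

Lemma closed_Xray x : closed [set m : R | X (m *: x)].
Proof.
apply: (@preimage_closed _ _ (fun m : R => m *: x) X) => //.
by move=> m _; exact: scalel_continuous.
Qed.

Lemma closed_ray x c k :
  closed [set m : R | 0 <= m /\ X (m *: x) /\ m * c <= k].
Proof.
have -> : [set m : R | 0 <= m /\ X (m *: x) /\ m * c <= k] =
  [set m | 0 <= m] `&` ([set m | X (m *: x)] `&` [set m | m * c <= k]).
  by apply/seteqP; split => m /=.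
apply: closedI; first exact: closed_ge.
apply: closedI; [exact: closed_Xray|exact: closed_half].
Qed.

Lemma sup_closed_mem (A : set R) : closed A -> A !=set0 -> has_ubound A -> A (sup A).
Proof.
move=> cA A0 ub; have h := closure_sup A0 ub.
by have E := (closure_id A).1 cA; rewrite -E in h.
Qed.

Lemma sup_eq (A : set R) x : A x -> ubound A x -> sup A = x.
Proof.
move=> Ax ub; apply/le_anti/andP; split; first by apply: ge_sup => //; exists x.
by apply: ub_le_sup => //; exists x.
Qed.

Lemma Yo_ray_eq x : [set m | 0 <= m /\ Yo (m *: x)] =
  [set m : R | 0 <= m /\ X (m *: x) /\ m * co x <= b].
Proof.
apply/seteqP; split => m /=.
  by move=> [m0 [Xm h]]; rewrite -coZ //.
by move=> [m0 [Xm h]]; split => //; split => //; rewrite -/(co _) coZ.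
Qed.

Section Alpha.
Variable w : 'cV[R]_d.
Hypotheses (w0 : w != 0) (Yw : Yo w).

Lemma alpha_spec : 0 <= al w /\ Yo (al w *: w).
Proof.
have : [set m | 0 <= m /\ Yo (m *: w)] (al w); last by [].
apply: sup_closed_mem.
- by rewrite Yo_ray_eq; exact: closed_ray.
- by exists 1; rewrite /= scale1r ler01.
- by exists (normv w)^-1 => m [m0 [Xm _]]; exact: ray_bound.
Qed.

Lemma alpha_ub m : 0 <= m -> Yo (m *: w) -> m <= al w.
Proof.
move=> m0 Ym; apply: ub_le_sup => //.
by exists (normv w)^-1 => k [k0 [Xk _]]; exact: ray_bound.
Qed.

Lemma alpha_ge1 : 1 <= al w.
Proof. by apply: alpha_ub; rewrite ?ler01 // scale1r. Qed.

Lemma obj_eq : obj w = U (al w *: w).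
Proof.
have a0 := (alpha_spec).1.
rewrite ucbZ // /alt_obj /kappa /ucb.
have n0 : bt * mnorm Vi w != 0 by rewrite mulf_neq0 // gt_eqF // pd.
move: n0; set n := bt * mnorm Vi w; set t := dotv th w; set a := al w => n0.
by rewrite -mulrA -/n; field.
Qed.

End Alpha.


Lemma one_lt_two : (1 : R) < 2.
Proof. by rewrite ltr1n. Qed.

Lemma Yb_ne0 w : Yb w -> w != 0.
Proof.
move=> [Yw H]; apply/negP => /eqP w0; apply: (H 2 one_lt_two).
by rewrite w0 scaler0 -w0.
Qed.

Lemma Yb_uniq x s : Yb x -> Yb (s *: x) -> 0 < s -> s = 1.
Proof.
move=> [Yx Hx] [Ys Hs] s0; case: (ltgtP s 1) => // hs; exfalso.
- apply: (Hs s^-1); first by rewrite invf_gt1.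
  by rewrite scalerA mulVf ?gt_eqF // scale1r.
- exact: Hx s hs Ys.
Qed.

Lemma xs_ne0 : xs != 0.
Proof. by apply/negP => /eqP e; move: uxs; rewrite e ucb0 ltxx. Qed.

Section Argmax.
Context {xt : 'cV[R]_d} {mu : R}.
Hypotheses (hxt : is_argmax Yo U xt)
  (hmu : is_max [set m | 0 <= m <= 1 /\ Yp (m *: xt)] mu).
Local Notation bt' := (Num.min (nu / normv xt) 1).
Local Notation g := (Num.max bt' mu).

Lemma uxt_pos : 0 < U xt.
Proof. by have [_ h] := hxt; apply: lt_le_trans uxs (h _ Yxs). Qed.

Lemma xt_ne0 : xt != 0.
Proof. by apply/negP => /eqP e; have := uxt_pos; rewrite e ucb0 ltxx. Qed.

Lemma xt_ray m : 0 <= m -> Yo (m *: xt) -> m <= 1.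
Proof.
move=> m0 Ym; have := hxt.2 _ Ym; rewrite ucbZ // => h.
rewrite leNgt; apply/negP => m1; move: h; rewrite leNgt.
by rewrite ltr_pMl ?m1 // uxt_pos.
Qed.

Lemma btp_pos : 0 < bt'.
Proof. by rewrite lt_min ltr01 andbT divr_gt0 // normv_gt0 // xt_ne0. Qed.

Lemma g_pos : 0 < g.
Proof. by apply: lt_le_trans btp_pos _; rewrite le_max lexx. Qed.

Lemma mu01 : 0 <= mu <= 1.
Proof. by have [[h _] _] := hmu. Qed.

Lemma g_le1 : g <= 1.
Proof.
have /andP[_ m1] := mu01.
by rewrite ge_max m1 andbT ge_min lexx orbT.
Qed.

Lemma Yh_g : Yh (g *: xt).
Proof.
case: (leP bt' mu) => h.
  by left; have [[_ ?] _] := hmu.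
right; split.
  rewrite /= normvZ ger0_norm; last exact: ltW btp_pos.
  have n0 := normv_gt0 _ xt_ne0.
  by rewrite -ler_pdivlMr // ge_min lexx.
apply: Yo_down; last exact: hxt.1.
by rewrite ltW ?btp_pos //= ge_min lexx orbT.
Qed.

Lemma Yb_g : Yb (g *: xt).
Proof.
split; first exact: Yh_g.
move=> z z1; rewrite scalerA => Hk.
have gp := g_pos.
have kg : g < z * g by rewrite ltr_pMl.
have k0 : 0 <= z * g by apply: ltW; apply: lt_trans kg.
case: Hk => [Yk|[nk Yk]].
- have k1 := xt_ray _ k0 (Yp_Yo _ Yk).
  have := hmu.2 (z * g) (conj (introT andP (conj k0 k1)) Yk).
  move=> h; have : z * g <= g by apply: le_trans h _; rewrite le_max lexx orbT.
  by rewrite leNgt kg.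
- have k1 := xt_ray _ k0 Yk.
  have n0 := normv_gt0 _ xt_ne0.
  move: nk; rewrite /= normvZ ger0_norm // -ler_pdivlMr // => k2.
  have : z * g <= g.
    apply: le_trans _ (_ : bt' <= g); last by rewrite le_max lexx.
    by rewrite le_min k1 k2.
  by rewrite leNgt kg.
Qed.

Lemma gxt_ne0 : g *: xt != 0.
Proof. by rewrite scaler_eq0 negb_or gt_eqF ?g_pos ?xt_ne0. Qed.

Lemma alpha_g : al (g *: xt) = g^-1.
Proof.
have gp := g_pos.
apply: sup_eq.
  split; first by apply: ltW; rewrite invr_gt0.
  by rewrite scalerA mulVf ?gt_eqF // scale1r; exact: hxt.1.
move=> m [m0 Ym]; rewrite scalerA in Ym.
have := xt_ray _ (mulr_ge0 m0 (ltW gp)) Ym.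
by rewrite -(div1r g) ler_pdivlMr.
Qed.

Lemma obj_g : obj (g *: xt) = U xt.
Proof.
have gp := g_pos.
rewrite (obj_eq _ gxt_ne0 (Yh_Yo _ Yh_g)) alpha_g scalerA mulVf ?gt_eqF //.
by rewrite scale1r.
Qed.

Lemma roful_alt w : Yb w -> obj w <= U xt.
Proof.
move=> Yw; have w0 := Yb_ne0 _ Yw; have Yow := Yh_Yo _ Yw.1.
rewrite (obj_eq _ w0 Yow); apply: hxt.2; exact: (alpha_spec _ w0 Yow).2.
Qed.

End Argmax.

Lemma Yh_ray_closed y : closed [set m | 0 <= m /\ Yh (m *: y)].
Proof.
have -> : [set m | 0 <= m /\ Yh (m *: y)] =
  [set m : R | 0 <= m /\ X (m *: y) /\ m * cp y <= b] `|`
  ([set m : R | 0 <= m /\ X (m *: y) /\ m * co y <= b] `&`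
   [set m : R | m * normv y <= nu]).
  apply/seteqP; split => m /=.
    move=> [m0 [[Xm h]|[hn [Xm h]]]].
      by left; split => //; split => //; rewrite -cpZ.
    right; split; first by split => //; split => //; rewrite -coZ.
    by move: hn; rewrite /= normvZ ger0_norm.
  move=> [[m0 [Xm h]]|[[m0 [Xm h]] hn]].
    by split => //; left; split => //; rewrite -/(cp _) cpZ.
  split => //; right; split; first by rewrite /= normvZ ger0_norm.
  by split => //; rewrite -/(co _) coZ.
apply: closedU; first exact: closed_ray.
apply: closedI; [exact: closed_ray|exact: closed_half].
Qed.

Lemma rep y : Yo y -> y != 0 ->
  exists s, 0 < s /\ Yb (s *: y).
Proof.
move=> Yy y0.
set H := [set m | 0 <= m /\ Yh (m *: y)].
have n0 := normv_gt0 _ y0.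
set m0 := Num.min (nu / normv y) 1.
have m0p : 0 < m0 by rewrite lt_min ltr01 andbT divr_gt0.
have Hm0 : H m0.
  split; first exact: ltW.
  right; split.
    rewrite /= normvZ ger0_norm; last exact: ltW.
    by rewrite -ler_pdivlMr // ge_min lexx.
  by apply: Yo_down => //; rewrite ltW //= ge_min lexx orbT.
have ub : has_ubound H.
  exists (normv y)^-1 => m [m0' Hm].
  by apply: ray_bound => //; exact: (Yh_Yo _ Hm).1.
have Hs := sup_closed_mem _ (Yh_ray_closed y) (ex_intro _ m0 Hm0) ub.
have sp : 0 < sup H by apply: lt_le_trans m0p _; exact: ub_le_sup.
exists (sup H); split => //; split; first exact: Hs.2.
move=> z z1; rewrite scalerA => Hz.
have : z * sup H <= sup H.
  apply: ub_le_sup => //; split => //; apply: mulr_ge0; last exact: ltW.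
  by apply: ltW; apply: lt_trans z1.
by rewrite leNgt ltr_pMl // z1.
Qed.

Section Alt.
Variable x : 'cV[R]_d.
Hypothesis hx : is_argmax Yb obj x.

Lemma x_ne0 : x != 0. Proof. exact: Yb_ne0 _ hx.1. Qed.
Lemma Yo_x : Yo x. Proof. exact: Yh_Yo _ hx.1.1. Qed.

Lemma claim y : Yo y -> y != 0 -> 0 <= U y -> U y <= obj x.
Proof.
move=> Yy y0 uy; have [s [s0 Ybs]] := rep _ Yy y0.
have := hx.2 _ Ybs.
have y'0 := Yb_ne0 _ Ybs; have Yoy' := Yh_Yo _ Ybs.1.
rewrite (obj_eq _ y'0 Yoy') scalerA.
have ha : s^-1 <= al (s *: y).
  apply: alpha_ub => //; first by apply: ltW; rewrite invr_gt0.
  by rewrite scalerA mulVf ?gt_eqF // scale1r.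
have k1 : 1 <= al (s *: y) * s by rewrite -(ler_pdivrMr _ _ s0) div1r.
have a0 := (alpha_spec _ y'0 Yoy').1.
rewrite ucbZ; last exact: mulr_ge0 a0 (ltW s0).
by apply: le_trans; exact: ler_peMl.
Qed.

Lemma xs_le : U xs <= obj x.
Proof. by apply: claim => //; [exact: xs_ne0|exact: ltW]. Qed.

Lemma xt_argmax : is_argmax Yo U (al x *: x).
Proof.
split; first exact: (alpha_spec _ x_ne0 Yo_x).2.
move=> y Yy; rewrite -(obj_eq _ x_ne0 Yo_x).
case: (eqVneq y 0) => [->|y0].
  by rewrite ucb0; apply: le_trans xs_le; exact: ltW.
case: (lerP 0 (U y)) => hy; first exact: claim.
by apply: le_trans (ltW hy) _; apply: le_trans xs_le; exact: ltW.
Qed.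

Lemma alt_in_roful : roful_plays X b nu Vi ah th bt x.
Proof.
set xt := al x *: x.
set P := [set m : R | 0 <= m <= 1 /\ Yp (m *: xt)].
have Yxt : Yo xt := xt_argmax.1.
have cP : closed P.
  have -> : P = [set m : R | 0 <= m /\ X (m *: xt) /\ m * cp xt <= b] `&`
                [set m : R | m <= 1].
    apply/seteqP; split => m /=.
      by move=> [/andP[m0 m1] [Xm h]]; split => //; split => //; split => //; rewrite -cpZ.
    move=> [[m0 [Xm h]] m1]; split; first by rewrite m0 m1.
    by split => //; rewrite -/(cp _) cpZ.
  apply: closedI; [exact: closed_ray|exact: closed_le].
have P0 : P 0.
  split; first by rewrite lexx ler01.
  split; first by apply: (stX xt Yxt.1 0); rewrite lexx ler01.
  have := cpZ xt 0 (lexx 0); rewrite /cp mul0r => ->; exact: ltW.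
have ub : has_ubound P by exists 1 => m [/andP[_ m1] _].
have PS := sup_closed_mem _ cP (ex_intro _ 0 P0) ub.
have hmu : is_max P (sup P) by split => // m Pm; exact: ub_le_sup.
exists xt, (sup P); split => //; first exact: xt_argmax.
have Ybg := Yb_g xt_argmax hmu.
set g := Num.max _ _ in Ybg *.
have a1 := alpha_ge1 _ x_ne0 Yo_x.
have gp : 0 < g := g_pos xt_argmax.
move: Ybg; rewrite /xt scalerA => Ybg.
have := Yb_uniq _ _ hx.1 Ybg; rewrite mulr_gt0 //; last by apply: lt_le_trans a1; exact: ltr01.
by move=> /(_ isT) ->; rewrite scale1r.
Qed.

End Alt.

Lemma round_eq : roful_plays X b nu Vi ah th bt = alt_plays X b nu Vi ah th bt.
Proof.
apply/seteqP; split => x.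
  move=> [xt [mu [hxt hmu ->]]]; split; first exact: Yb_g hxt hmu.
  by move=> w Yw; rewrite obj_g //; exact: roful_alt.
by move=> hx; exact: alt_in_roful.
Qed.

End Round.

Section PD.
Context {R : realType} {d : nat}.


Lemma quad_outer (y z : 'cV[R]_d) :
  (y^T *m (z *m z^T) *m y) 0 0 = dotv z y ^+ 2.
Proof.
rewrite mulmxA -mulmxA mxE big_ord1 expr2 {1}[dotv z y]dotvC.
by rewrite /dotv (ord1 ord0).
Qed.

Lemma quadV (lam : R) (xs : nat -> 'cV[R]_d) t (y : 'cV[R]_d) :
  (y^T *m Vmat lam xs t *m y) 0 0 =
  lam * dotv y y + \sum_(1 <= k < t) dotv (xs k) y ^+ 2.
Proof.
rewrite /Vmat mulmxDr mulmxDl mxE mul_mx_scalar -scalemxAl mxE; congr (_ + _).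
rewrite mulmx_sumr mulmx_suml summxE; apply: eq_bigr => k _.
exact: quad_outer.
Qed.

Lemma quadV_ge (lam : R) (xs : nat -> 'cV[R]_d) t (y : 'cV[R]_d) :
  lam * dotv y y <= (y^T *m Vmat lam xs t *m y) 0 0.
Proof.
rewrite quadV lerDl; apply: sumr_ge0 => k _; exact: sqr_ge0.
Qed.

Lemma Vmat_sym (lam : R) (xs : nat -> 'cV[R]_d) t : (Vmat lam xs t)^T = Vmat lam xs t.
Proof.
rewrite /Vmat linearD /= tr_scalar_mx linear_sum /=; congr (_ + _).
by apply: eq_bigr => k _; rewrite trmx_mul trmxK.
Qed.

Lemma Vmat_unit (lam : R) (xs : nat -> 'cV[R]_d) t : 0 < lam -> Vmat lam xs t \in unitmx.
Proof.
move=> l0; rewrite -row_free_unit -kermx_eq0; apply/eqP/row_matrixP => i.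
set r := row i _.
have rV : r *m Vmat lam xs t = 0 by rewrite /r -row_mul mulmx_ker row0.
have := quadV_ge lam xs t r^T; rewrite trmxK rV mul0mx mxE.
move=> h; rewrite row0; apply/eqP; apply: contraLR h => r0.
rewrite -ltNge; apply: mulr_gt0 => //; apply: dotv_self_gt0.
by apply: contra r0 => /eqP e; rewrite -[r]trmxK e linear0.
Qed.

Lemma Vi_pd (lam : R) (xs : nat -> 'cV[R]_d) t (x : 'cV[R]_d) : 0 < lam -> x != 0 ->
  0 < mnorm (invmx (Vmat lam xs t)) x.
Proof.
move=> l0 x0; have U := Vmat_unit lam xs t l0.
set V := Vmat lam xs t in U *.
set y := invmx V *m x.
have xE : x = V *m y by rewrite /y mulKVmx.
have y0 : y != 0 by apply: contra x0 => /eqP e; rewrite xE e mulmx0.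
rewrite /mnorm sqrtr_gt0 xE trmx_mul Vmat_sym.
have -> : y^T *m V *m invmx V *m (V *m y) = y^T *m V *m y.
  by rewrite -mulmxA mulKmx.
apply: lt_le_trans (quadV_ge lam xs t y); apply: mulr_gt0 => //.
exact: dotv_self_gt0.
Qed.

End PD.

Theorem proposition1 (R : realType) (d : nat) (X : set 'cV[R]_d)
  (theta a : 'cV[R]_d) (b S_a S_th rho delta lam : R)
  (xs : nat -> 'cV[R]_d) (eps eta : nat -> R) (xstar : 'cV[R]_d) :
  let S := Num.max S_a S_th in
  let nu := b / S_a in
  let ys := fun k => dotv theta (xs k) + eps k in
  let zs := fun k => dotv a (xs k) + eta k in
  let Vi := fun t => invmx (Vmat lam xs t) in
  let ah := fun t => lsq lam xs zs t in
  let th := fun t => lsq lam xs ys t in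
  let bt := fun t => beta d rho lam delta S t in
  closed X -> star_convex0 X -> (forall x, X x -> normv x <= 1) ->
  0 < b -> 0 < S_a -> normv a <= S_a -> normv theta <= S_th -> nu <= 1 ->
  0 < rho -> 0 < delta < 1 -> 1 <= lam ->
  (forall k, X (xs k)) ->
  is_argmax [set x | X x /\ dotv a x <= b] (dotv theta) xstar ->
  0 < dotv theta xstar ->
  (* the event E_conf *)
  (forall t, (1 <= t)%N -> forall x, X x ->
     `|dotv x (th t - theta)| <= bt t * mnorm (Vi t) x /\
     `|dotv x (ah t - a)| <= bt t * mnorm (Vi t) x) ->
  forall t, (1 <= t)%N ->
    roful_plays X b nu (Vi t) (ah t) (th t) (bt t) =
    alt_plays X b nu (Vi t) (ah t) (th t) (bt t).
Proof.
move=> S nu ys zs Vi ah th bt clX stX bndX b0 Sa0 na nth nu1 rho0 dl lam1 Xxs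
  hstar pos Econf t t1.
have l0 : 0 < lam by apply: lt_le_trans lam1; exact: ltr01.
have Xst : X xstar := hstar.1.1.
have [E1 E2] := Econf t t1 xstar Xst.
have bt0 : 0 < bt t.
  rewrite /bt /beta; apply: ltr_wpDl.
    by apply: mulr_ge0; [exact: ltW|exact: sqrtr_ge0].
  apply: mulr_gt0; first by rewrite sqrtr_gt0.
  by apply: lt_le_trans Sa0 _; rewrite /S le_max lexx.
apply: (@round_eq R d X b nu (Vi t) (ah t) (th t) (bt t) xstar) => //.
- by rewrite /nu divr_gt0.
- by move=> x x0; exact: Vi_pd.
- split => //; have h2 := hstar.1.2.
  move: E2; rewrite dotvD dotvN [dotv xstar (ah t)]dotvC [dotv xstar a]dotvC.
  rewrite ler_norml => /andP[_ h]; lra.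
- rewrite /ucb; move: E1; rewrite dotvD dotvN [dotv xstar (th t)]dotvC [dotv xstar theta]dotvC.
  rewrite ler_norml => /andP[h _]; lra.
Qed.
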